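(* Let $\sigma$ be a confined position on $K_{a,b}$ with sides $L$ ($|L|=a$) and $R$ ($|R|=b$), and let $t\ge 0$. If $a$ divides $\alpha_t(L)$, then $u_t(\sigma,v)=\alpha_t(L)/a$ for every $v\in L$.
   Context: Parallel chip-firing game: a position $\sigma$ assigns a nonnegative integer to each vertex; writing $\Phi_\sigma(v)$ for the number of neighbors $w$ of $v$ with $\sigma(w)\ge\deg(w)$, the step operator is $U\sigma(v)=\sigma(v)+\Phi_\sigma(v)$ if $\sigma(v)\le \deg(v)-1$ and $U\sigma(v)=\sigma(v)+\Phi_\sigma(v)-\deg(v)$ otherwise. A position is confined if every vertex satisfies $\Phi_\sigma(v)\le\sigma(v)\le\Phi_\sigma(v)+\deg(v)-1$. In $K_{a,b}$ each vertex of $L$ is adjacent exactly to all vertices of $R$. $u_t(\sigma,v)=|\{s: 0\le s<t,\ U^s\sigma(v)\ge\deg(v)\}|$, and $\alpha_t(L)=\sum_{v\in L}u_t(\sigma,v)$. *)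

(* Defs.v *)
From mathcomp Require Import all_boot.
Set Implicit Arguments. Unset Strict Implicit. Unset Printing Implicit Defensive.

(* Parallel chip-firing on a simple graph given by an edge relation e on a finType T.
   Positions are functions T -> nat. *)
Section ChipFiring.
Variables (T : finType) (e : rel T).

Definition deg (v : T) : nat := #|[pred w | e v w]|.

Definition Phi (sigma : T -> nat) (v : T) : nat :=
  #|[pred w | e v w && (deg w <= sigma w)]|.

Definition step (sigma : T -> nat) : T -> nat :=
  fun v => if deg v <= sigma v then sigma v + Phi sigma v - deg v
           else sigma v + Phi sigma v.

(* confined: Phi(v) <= sigma(v) <= Phi(v) + deg(v) - 1  (integer inequality,
   written strictly to avoid truncated subtraction) *)
Definition confined (sigma : T -> nat) : Prop :=
  forall v, Phi sigma v <= sigma v /\ sigma v < Phi sigma v + deg v.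

Definition u (t : nat) (sigma : T -> nat) (v : T) : nat :=
  count (fun s => deg v <= iter s step sigma v) (iota 0 t).

End ChipFiring.

(* Complete bipartite graph K_{a,b}: vertices 'I_a + 'I_b, L = inl side, R = inr side. *)
Definition kab (a b : nat) : rel ('I_a + 'I_b)%type :=
  fun x y => match x, y with
             | inl _, inr _ => true
             | inr _, inl _ => true
             | _, _ => false
             end.
Arguments kab a b : clear implicits.

Definition alphaL (a b t : nat) (sigma : ('I_a + 'I_b)%type -> nat) : nat :=
  \sum_(i < a) @u _ (kab a b) t sigma (inl i).
Arguments alphaL a b t sigma : clear implicits.

(* Main.v *)
Require Import Defs.
From mathcomp Require Import all_boot.
From Stdlib Require Import Lia.

Section K.
Variables (a b : nat) (sigma : ('I_a + 'I_b)%type -> nat).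
Let e := kab a b.

Lemma degL (i j : 'I_a) : deg e (inl i) = deg e (inl j).
Proof. by rewrite /deg; apply: eq_card => w. Qed.

Lemma PhiL (s : ('I_a + 'I_b)%type -> nat) (i j : 'I_a) :
  Phi e s (inl i) = Phi e s (inl j).
Proof. by rewrite /Phi; apply: eq_card => w. Qed.

Lemma u_succ t v : u e t.+1 sigma v = u e t sigma v + (deg e v <= iter t (step e) sigma v).
Proof. by rewrite /u -addn1 iotaD count_cat /= addn0. Qed.

Lemma inv (i j : 'I_a) (Hw : forall i j : 'I_a, sigma (inl i) < sigma (inl j) + deg e (inl i)) t :
  let x k := iter t (step e) sigma (inl k) in
  x i < x j + deg e (inl i) /\
  x i + deg e (inl i) * u e t sigma (inl i) + sigma (inl j) =
  x j + deg e (inl i) * u e t sigma (inl j) + sigma (inl i).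
Proof.
elim: t => [|t [IH1 IH2]] x /=.
  by split; [apply: Hw | rewrite /x /u /= !muln0 !addn0 addnC].
rewrite /x /= !u_succ.
set st := iter t (step e) sigma in IH1 IH2 *.
rewrite /step (degL j i) (PhiL _ j i).
set D := deg e (inl i) in IH1 IH2 *; set P := Phi e st (inl i).
set xi := st (inl i) in IH1 IH2 *.
set xj := st (inl j) in IH1 IH2 *.
rewrite !mulnDr.
set ui := u e t sigma (inl i) in IH2 *; set uj := u e t sigma (inl j) in IH2 *.
case: (leqP D xi) => Hi; case: (leqP D xj) => Hj /=;
  rewrite ?muln1 ?muln0 ?addn0.
- move/leP: Hi => Hi; move/leP: Hj => Hj; move/ltP: IH1 => IH1.
  split; [apply/ltP|]; rewrite -?plusE -?minusE -?multE in IH1 IH2 *; lia.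
- move/leP: Hi => Hi; move/ltP: Hj => Hj; move/ltP: IH1 => IH1.
  split; [apply/ltP|]; rewrite -?plusE -?minusE -?multE in IH1 IH2 *; lia.
- move/ltP: Hi => Hi; move/leP: Hj => Hj; move/ltP: IH1 => IH1.
  split; [apply/ltP|]; rewrite -?plusE -?minusE -?multE in IH1 IH2 *; lia.
- move/ltP: Hi => Hi; move/ltP: Hj => Hj; move/ltP: IH1 => IH1.
  split; [apply/ltP|]; rewrite -?plusE -?minusE -?multE in IH1 IH2 *; lia.
Qed.

End K.

Theorem lemma3p2 (a b : nat) (sigma : ('I_a + 'I_b)%type -> nat) (t : nat) :
  @confined _ (kab a b) sigma ->
  a %| alphaL a b t sigma ->
  forall i : 'I_a, @u _ (kab a b) t sigma (inl i) = alphaL a b t sigma %/ a.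
Proof.
move=> Hc Hdv i.
set U := fun k : 'I_a => u (kab a b) t sigma (inl k).
have Hw : forall i j : 'I_a, sigma (inl i) < sigma (inl j) + deg (kab a b) (inl i).
  move=> i1 j1; have [H1 _] := Hc (inl j1); have [_ H2] := Hc (inl i1).
  by rewrite (PhiL _ _ _ i1 j1) in H2; apply: leq_trans H2 _; rewrite leq_add2r.
have Hpair : forall i j : 'I_a, U i <= (U j).+1.
  move=> i1 j1.
  have [A1 A2] := @inv _ _ sigma i1 j1 Hw t.
  have [A3 _] := @inv _ _ sigma j1 i1 Hw t.
  have A4 := Hw i1 j1.
  rewrite (degL _ _ j1 i1) in A3.
  have Dpos : 0 < deg (kab a b) (inl i1).
    by case: (deg _ _) (Hw i1 i1) => //; rewrite addn0 ltnn.
  rewrite /U; move: A1 A2 A3 A4 Dpos.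
  set D := deg _ _; set ui := u _ _ _ _; set uj := u _ _ _ (inl j1).
  move=> A1 A2 A3 A4 Dpos.
  move: A1 A2 A3 A4.
  set si := sigma (inl i1); set sj := sigma (inl j1).
  set xi := iter t _ sigma (inl i1); set xj := iter t _ sigma (inl j1).
  move=> A1 A2 A3 A4.
  rewrite -ltnS -(ltn_pmul2l Dpos) !mulnS.
  move/ltP: A1 => A1; move/ltP: A3 => A3; move/ltP: A4 => A4; move/ltP: Dpos => Dp; apply/ltP.
  rewrite -?plusE -?multE in A1 A2 A3 A4 *; lia.
have a0 : 0 < a by apply: leq_ltn_trans (ltn_ord i).
case: (@arg_minnP _ i xpredT U isT) => k0 _ Hmin.
set m := U k0 in Hmin *.
have HU : forall j, U j = m + (m < U j).
  move=> j; have H1 := Hmin j isT; have H2 := Hpair j k0; rewrite -/m in H1 H2.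
  case: (ltnP m (U j)) => H3 /=.
    by apply/eqP; rewrite addn1 eqn_leq H2 H3.
  by rewrite addn0; apply/eqP; rewrite eqn_leq H1 H3.
have Ha : alphaL a b t sigma = a * m + \sum_(j < a) (m < U j).
  rewrite /alphaL -/U (eq_bigr _ (fun j _ => HU j)) big_split /= sum_nat_const card_ord.
  by [].
set c := \sum_(j < a) _ in Ha.
have Hca : c < a.
  rewrite /c (bigD1 k0) //= ltnn add0n.
  apply: (@leq_ltn_trans (\sum_(j < a | j != k0) 1)).
    by apply: leq_sum => j _; apply: leq_b1.
  by rewrite sum1_card cardC1 card_ord prednK.
have c0 : c = 0.
  move: Hdv; rewrite Ha dvdn_addr ?dvdn_mulr // => Hd.
  apply/eqP; rewrite eqn0Ngt; apply/negP => Hp.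
  by have := dvdn_leq Hp Hd; rewrite leqNgt Hca.
have : c == 0 by rewrite c0.
rewrite /c sum_nat_eq0 => /forallP /(_ i) /eqP Hi.
by rewrite Ha c0 addn0 mulKn // -/(U i) HU Hi addn0.
Qed.
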